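(* Let $X=\mathbb{P}^G(w_1,w_2,w_3)$ be a fake weighted projective plane with $\gcd(w_1,w_2,w_3)=1$, and let $d\ge1$ be the degree of a curve class (so $\mathsf d\cdot D_k=w_kd$). Then $\mathrm T(\mathfrak q)^X_{\mathsf d}$ has a unique element, and its multiplicity is $|G|\,w_1w_2w_3\,d^2$.
   Context: $\mathbb P^G(w_1,w_2,w_3)$ is the toric variety of the complete fan in $N_{\mathbb R}$, $N\cong\mathbb Z^2$, with rays $[D_1],[D_2],[D_3]$ spanned by primitive $\Delta(1),\Delta(2),\Delta(3)$ with $\sum w_k\Delta(k)=0$, and $G=N/L$, $L$ the sublattice generated by the $\Delta(k)$. $M=\mathrm{Hom}(N,\mathbb Z)$. A genus $0$ degree $\mathsf d$ maximally tangent marked tropical curve in $X$ is (an isomorphism class of) a pair $(\Gamma,h)$: $\Gamma$ a finite tree with some univalent vertices removed, no univalent or bivalent vertices, edge weights $w:\Gamma^{[1]}\to\mathbb Z_{\ge0}$; weight-$0$ non-compact edges are interior markings $P_1,P_2$, and there is exactly one positive-weight non-compact edge (exterior marking) for each toric divisor $D_j$; $h:\Gamma\to N_{\mathbb R}$ proper continuous, constant on an edge iff weight $0$, otherwise an embedding onto a segment of a rational-slope line; balancing $\sum_{E\ni V}w(E)u_{(V,E)}=0$ at every vertex; the exterior marking of $D_j$ is parallel to $[D_j]$ (direction $\Delta(j)$) with weight $\mathsf d\cdot D_j$. An interior marking satisfies a $\psi^k$-condition if its vertex is incident to exactly $k+2$ positive-weight edges. $\mathrm T(\mathfrak q)^X_{\mathsf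 d}$ is the set of such curves with $P_1,P_2$ mapped to two fixed general points of $N_{\mathbb R}$, $P_2$ satisfying a $\psi^{r_X-1}$-condition ($r_X$ the Picard rank; here $r_X=1$, so $\psi^0$). Multiplicity: $A=\mathbb Z[N]\otimes\Lambda^\bullet M$ with product $z^n\alpha\cdot z^{n'}\beta=z^{n+n'}\alpha\wedge\beta$ and $\ell_k(z^{n_1}\alpha_1\otimes\cdots\otimes z^{n_k}\alpha_k)=z^{\sum n_i}\iota_{\sum n_i}(\alpha_1\wedge\cdots\wedge\alpha_k)$. Choose a sink vertex $V_\infty$, orient toward it; $\zeta_E=z^{w(E)\Delta(j)}$ for the exterior marking of $D_j$, $\zeta_P$ a generator of $\Lambda^{\dim N}M$ for interior markings, $\zeta_{E_{out}}=\ell_k(\zeta_{E_1}\otimes\cdots\otimes\zeta_{E_k})$ at a vertex $V\neq V_\infty$ with incoming $E_1,\dots,E_k$; $\zeta_\Gamma=\prod_{E\ni V_\infty}\zeta_E\in z^0\otimes\Lambda^{\dim N}M$ and $\mathrm{Mult}(\Gamma)$ is its index in $\Lambda^{\dim N}M$. *)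

(* Defs.v *)
(* Tropical curves in N_R = R^2 with R an arbitrary real field,
   lattice N = M = Z^2 (int * int). *)
From HB Require Import structures.
From mathcomp Require Import all_boot all_order all_algebra.
Set Implicit Arguments. Unset Strict Implicit. Unset Printing Implicit Defensive.
Import Order.TTheory GRing.Theory Num.Theory.
Local Open Scope ring_scope.

Definition lat := (int * int)%type.
Definition lzero : lat := (0, 0).
Definition ladd (x y : lat) : lat := (x.1 + y.1, x.2 + y.2).
Definition lscale (k : int) (x : lat) : lat := (k * x.1, k * x.2).
Definition lsum (s : seq lat) : lat := foldr ladd lzero s.
Definition primitive (x : lat) : bool := gcdn (absz x.1) (absz x.2) == 1%N.
Definition det2 (a b : lat) : int := a.1 * b.2 - a.2 * b.1.

(* the sublattice L generated by the Delta(k), and |G| = |N/L| *)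
Definition inL (D : 'I_3 -> lat) (x : lat) : Prop :=
  exists c : 'I_3 -> int, x = lsum [seq lscale (c k) (D k) | k <- enum 'I_3].
(* g is the order of G = N/L: 'I_g indexes a complete system of representatives *)
Definition orderG (D : 'I_3 -> lat) (g : nat) : Prop :=
  exists reps : 'I_g -> lat,
    (forall i j, inL D (ladd (reps i) (lscale (-1) (reps j))) -> i = j) /\
    (forall x, exists i, inL D (ladd x (lscale (-1) (reps i)))).

Definition weight_relation (w : 'I_3 -> nat) (D : 'I_3 -> lat) : Prop :=
  lsum [seq lscale (w k)%:Z (D k) | k <- enum 'I_3] = lzero.
(* nondegeneracy: the rays span N_R (with the positive relation this is
   equivalent to the three cones forming a complete fan) *)
Definition rays_span (D : 'I_3 -> lat) : Prop :=
  det2 (D ord0) (D (lift ord0 ord0)) != 0.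

(* ---------- Lambda^* M for M of rank 2: degrees 0,1,2 ---------- *)
Record lam := Lam { l0 : int; l1 : lat; l2 : int }.
(* l2 is the coefficient of the generator e1^* /\ e2^* *)
Definition wedge (a b : lam) : lam :=
  Lam (l0 a * l0 b)
      (ladd (lscale (l0 a) (l1 b)) (lscale (l0 b) (l1 a)))
      (l0 a * l2 b + l0 b * l2 a + det2 (l1 a) (l1 b)).
Definition contract (n : lat) (a : lam) : lam :=
  Lam ((l1 a).1 * n.1 + (l1 a).2 * n.2) (lscale (l2 a) (- n.2, n.1)) 0.
Definition lam1 : lam := Lam 1 lzero 0.
Definition vol : lam := Lam 0 lzero 1.

(* monomials z^n (x) alpha of A = Z[N] (x) Lambda^* M; products and the
   brackets l_k of monomials are monomials *)
Definition mono := (lat * lam)%type.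
Definition mprod (s : seq mono) : mono :=
  (lsum (map fst s), foldr wedge lam1 (map snd s)).
Definition ell (s : seq mono) : mono :=
  let n := lsum (map fst s) in (n, contract n (foldr wedge lam1 (map snd s))).

(* the five non-compact edges: inl i = interior marking P_(i+1),
   inr j = exterior marking of D_(j+1) *)
Notation leg := ('I_2 + 'I_3)%type.
Definition mP1 : leg := inl ord0.
Definition mP2 : leg := inl ord_max.
Definition leg_w (w : 'I_3 -> nat) (d : nat) (l : leg) : nat :=
  match l with inl _ => 0%N | inr j => (d * w j)%N end.
Definition leg_u (D : 'I_3 -> lat) (l : leg) : lat :=
  match l with inl _ => lzero | inr j => D j end.

Record tcurve (R : Type) := TCurve {
  tV : finType;
  tE : finType;
  tsrc : tE -> tV;
  ttgt : tE -> tV;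
  tw : tE -> nat;
  tu : tE -> lat;               (* primitive direction from tsrc to ttgt *)
  tpos : tV -> R * R;
  tleg : leg -> tV
}.

Section Curves.
Variable R : realFieldType.
Variable C : tcurve R.

Definition incid (e : tE C) (v : tV C) : bool := (tsrc e == v) || (ttgt e == v).
Definition tadj : rel (tV C) := fun a b =>
  [exists e : tE C, ((tsrc e == a) && (ttgt e == b)) || ((tsrc e == b) && (ttgt e == a))].
Definition is_tree : bool :=
  [forall e : tE C, tsrc e != ttgt e] && (#|tE C|.+1 == #|tV C|)%N &&
  [forall a : tV C, forall b : tV C, connect tadj a b].
Definition valence (v : tV C) : nat :=
  (#|[pred e : tE C | incid e v]| + #|[pred l : leg | tleg C l == v]|)%N.
Definition other (e : tE C) (v : tV C) : tV C := if tsrc e == v then ttgt e else tsrc e.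

Definition edge_ok (e : tE C) : Prop :=
  if tw e == 0%N then tpos (ttgt e) = tpos (tsrc e)
  else primitive (tu e) /\
       exists t : R, 0 < t /\
         tpos (ttgt e) = ((tpos (tsrc e)).1 + t * (tu e).1%:~R,
                          (tpos (tsrc e)).2 + t * (tu e).2%:~R).

Definition flux (D : 'I_3 -> lat) (w : 'I_3 -> nat) (d : nat) (v : tV C) : lat :=
  ladd (lsum [seq lscale (tw e)%:Z (if tsrc e == v then tu e else lscale (-1) (tu e))
             | e <- enum (tE C) & incid e v])
       (lsum [seq lscale (leg_w w d l)%:Z (leg_u D l) | l <- enum {: leg} & tleg C l == v]).

Definition pos_valence (w : 'I_3 -> nat) (d : nat) (v : tV C) : nat :=
  (#|[pred e : tE C | incid e v && (0 < tw e)%N]| +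
   #|[pred l : leg | (tleg C l == v) && (0 < leg_w w d l)%N]|)%N.

Definition leg_zeta (D : 'I_3 -> lat) (w : 'I_3 -> nat) (d : nat) (l : leg) : mono :=
  match l with inl _ => (lzero, vol) | inr j => (lscale (d * w j)%N%:Z (D j), lam1) end.

Fixpoint zeta_from D w d (k : nat) (v : tV C) (par : tE C) {struct k} : mono :=
  match k with
  | 0 => (lzero, lam1)
  | k'.+1 =>
      ell ([seq leg_zeta D w d l | l <- enum {: leg} & tleg C l == v] ++
           [seq zeta_from D w d k' (other e v) e | e <- enum (tE C) & incid e v && (e != par)])
  end.

Definition zeta_sink D w d (s : tV C) : mono :=
  mprod ([seq leg_zeta D w d l | l <- enum {: leg} & tleg C l == s] ++
         [seq zeta_from D w d #|tV C| (other e s) e | e <- enum (tE C) & incid e s]).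
End Curves.

(* zeta lies in z^0 (x) Lambda^2 M and has index m there *)
Definition has_index (z : mono) (m : nat) : Prop :=
  z.1 = lzero /\ l0 z.2 = 0 /\ l1 z.2 = lzero /\ absz (l2 z.2) = m.

(* membership in T(q)^X_d, with P1, P2 mapped to p1, p2, P2 with a psi^0 condition *)
Definition in_Tq (R : realFieldType) (D : 'I_3 -> lat) (w : 'I_3 -> nat) (d : nat)
    (p1 p2 : R * R) (C : tcurve R) : Prop :=
  is_tree C /\
  (forall v : tV C, 3 <= valence v)%N /\
  (forall e : tE C, edge_ok e) /\
  (forall v : tV C, flux D w d v = lzero) /\
  tpos (tleg C mP1) = p1 /\ tpos (tleg C mP2) = p2 /\
  pos_valence w d (tleg C mP2) = 2%N.

Definition tc_iso (R : Type) (C C' : tcurve R) : Prop :=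
  exists (f : tV C -> tV C') (g : tE C -> tE C'),
    bijective f /\ bijective g /\
    (forall e, (tsrc (g e) = f (tsrc e) /\ ttgt (g e) = f (ttgt e)) \/
               (tsrc (g e) = f (ttgt e) /\ ttgt (g e) = f (tsrc e))) /\
    (forall e, tw (g e) = tw e) /\
    (forall v, tpos (f v) = tpos v) /\
    (forall l, tleg C' l = f (tleg C l)).

(* genericity: (p1,p2) avoids finitely many proper affine hyperplanes of N_R^2 *)
Record hyperplane (R : Type) := Hyp { hA : R * R; hB : R * R; hc : R }.
Definition hyp_proper (R : realFieldType) (H : hyperplane R) : Prop :=
  (hA H, hB H) <> ((0, 0), (0, 0)).
Definition off_hyp (R : realFieldType) (H : hyperplane R) (p1 p2 : R * R) : Prop :=
  (hA H).1 * p1.1 + (hA H).2 * p1.2 + (hB H).1 * p2.1 + (hB H).2 * p2.2 <> hc H.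

(* Prop-valued membership in a sequence (no eqType needed) *)
Fixpoint In_seq (T : Type) (x : T) (s : seq T) : Prop :=
  match s with [::] => False | y :: s' => x = y \/ In_seq x s' end.

(* Main.v *)
Require Import Defs.
From HB Require Import structures.
From mathcomp Require Import all_boot all_order all_algebra.
From mathcomp Require Import ring lra zify.
Import Order.TTheory GRing.Theory Num.Theory.
Local Open Scope ring_scope.
Set Implicit Arguments. Unset Strict Implicit. Unset Printing Implicit Defensive.

Definition i0 : 'I_3 := ord0.
Definition i1 : 'I_3 := lift ord0 ord0.
Definition i2 : 'I_3 := ord_max.

Lemma ord3P (j : 'I_3) : j = i0 \/ j = i1 \/ j = i2.
Proof.
case: j => [[|[|[|m]]] H].
- by left; apply: val_inj.
- by right; left; apply: val_inj.
- by right; right; apply: val_inj.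
- by [].
Qed.

Lemma enum3 : enum 'I_3 = [:: i0; i1; i2].
Proof. by apply: (inj_map val_inj); rewrite val_enum_ord. Qed.

Lemma sum3 (F : 'I_3 -> int) : \sum_(j < 3) F j = F i0 + F i1 + F i2.
Proof.
rewrite -big_enum /= enum3 !big_cons big_nil addr0 addrA //.
Qed.

Lemma lsum_fst (s : seq lat) : (lsum s).1 = \sum_(x <- s) x.1.
Proof. by elim: s => [|x s IH]; rewrite ?big_nil ?big_cons //= IH. Qed.
Lemma lsum_snd (s : seq lat) : (lsum s).2 = \sum_(x <- s) x.2.
Proof. by elim: s => [|x s IH]; rewrite ?big_nil ?big_cons //= IH. Qed.

Lemma prim_nz (u : lat) : primitive u -> u <> lzero.
Proof. by rewrite /primitive => /eqP H E; rewrite E in H. Qed.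

Lemma prim_neg (u : lat) : primitive u -> primitive (lscale (-1) u).
Proof. by rewrite /primitive /= !mulN1r !abszN. Qed.

Lemma prim_scale (k m : nat) (u v : lat) : (0 < k)%N -> primitive u -> primitive v ->
  lscale k%:Z u = lscale m%:Z v -> k = m /\ u = v.
Proof.
rewrite /primitive => kp /eqP pu /eqP pv [] E1 E2.
have Ekm : k = m.
  have := congr1 absz E1; have := congr1 absz E2; rewrite !abszM !absz_nat => F2 F1.
  have -> : k = gcdn (k * `|u.1|) (k * `|u.2|) by rewrite -muln_gcdr pu muln1.
  by rewrite F1 F2 -muln_gcdr pv muln1.
subst m; split => //.
have kn : (k%:Z) != 0 by rewrite eqz_nat -lt0n.
by move: E1 E2; case: u pu => u1 u2 _; case: v pv => v1 v2 _ /= E1 E2; rewrite (mulfI kn E1) (mulfI kn E2).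
Qed.

Section Lat.
Variables (D : 'I_3 -> lat) (w : 'I_3 -> nat).
Hypotheses (wpos : forall k, (0 < w k)%N)
 (wgcd : gcdn (gcdn (w ord0) (w (lift ord0 ord0))) (w ord_max) = 1%N)
 (Dprim : forall k, primitive (D k)) (rel : weight_relation w D) (span : rays_span D).

Notation W k := ((w k)%:Z).

Lemma rel1 : W i0 * (D i0).1 + W i1 * (D i1).1 + W i2 * (D i2).1 = 0.
Proof. move: rel; rewrite /weight_relation enum3 /= => /(congr1 fst) /=.
by rewrite addr0 addrA. Qed.
Lemma rel2 : W i0 * (D i0).2 + W i1 * (D i1).2 + W i2 * (D i2).2 = 0.
Proof. move: rel; rewrite /weight_relation enum3 /= => /(congr1 snd) /=.
by rewrite addr0 addrA. Qed.

Lemma Wnz k : W k != 0.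
Proof. by rewrite eqz_nat -lt0n. Qed.

Lemma det12E : W i2 * det2 (D i1) (D i2) = W i0 * det2 (D i0) (D i1).
Proof.
apply/eqP; rewrite -subr_eq0; apply/eqP.
have -> : W i2 * det2 (D i1) (D i2) - W i0 * det2 (D i0) (D i1) =
  (D i1).1 * (W i0 * (D i0).2 + W i1 * (D i1).2 + W i2 * (D i2).2)
  - (D i1).2 * (W i0 * (D i0).1 + W i1 * (D i1).1 + W i2 * (D i2).1)
  by rewrite /det2; ring.
by rewrite rel1 rel2; ring.
Qed.

Lemma det20E : W i2 * det2 (D i2) (D i0) = W i1 * det2 (D i0) (D i1).
Proof.
apply/eqP; rewrite -subr_eq0; apply/eqP.
have -> : W i2 * det2 (D i2) (D i0) - W i1 * det2 (D i0) (D i1) =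
  (D i0).2 * (W i0 * (D i0).1 + W i1 * (D i1).1 + W i2 * (D i2).1)
  - (D i0).1 * (W i0 * (D i0).2 + W i1 * (D i1).2 + W i2 * (D i2).2)
  by rewrite /det2; ring.
by rewrite rel1 rel2; ring.
Qed.

Lemma delta_ex : exists del : int,
  [/\ det2 (D i0) (D i1) = W i2 * del, det2 (D i1) (D i2) = W i0 * del
    & det2 (D i2) (D i0) = W i1 * del].
Proof.
have cop : coprime (w i2) (gcdn (w i0) (w i1)) by rewrite /coprime gcdnC wgcd.
have H0 : (w i2 %| w i0 * `|det2 (D i0) (D i1)|)%N.
  by apply/dvdnP; exists `|det2 (D i1) (D i2)|%N;
     have := congr1 absz det12E; rewrite !abszM !absz_nat => <-; rewrite mulnC.
have H1 : (w i2 %| w i1 * `|det2 (D i0) (D i1)|)%N.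
  by apply/dvdnP; exists `|det2 (D i2) (D i0)|%N;
     have := congr1 absz det20E; rewrite !abszM !absz_nat => <-; rewrite mulnC.
have : (w i2 %| gcdn (w i0) (w i1) * `|det2 (D i0) (D i1)|)%N.
  by rewrite muln_gcdl dvdn_gcd H0 H1.
rewrite Gauss_dvdr // => Hd.
have : (W i2 %| det2 (D i0) (D i1))%Z by [].
case/dvdzP => del Edel.
exists del; split; first by rewrite Edel mulrC.
- by apply: (mulfI (Wnz i2)); rewrite det12E Edel; ring.
- by apply: (mulfI (Wnz i2)); rewrite det20E Edel; ring.
Qed.

Lemma cop12 : coprime (w i1) (w i2).
Proof.
set k := gcdn (w i1) (w i2).
have ck : coprime k (w i0).
  by rewrite /coprime /k gcdnC gcdnA /i0 /i1 /i2 wgcd.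
have k1 : (k%:Z %| W i1)%Z by rewrite /dvdz unfold_in /= ?absz_nat /k dvdn_gcdl.
have k2 : (k%:Z %| W i2)%Z by rewrite /dvdz unfold_in /= ?absz_nat /k dvdn_gcdr.
have E1 : W i0 * (D i0).1 = - (W i1 * (D i1).1 + W i2 * (D i2).1).
  by apply/eqP; rewrite -subr_eq0 opprK addrA rel1.
have E2 : W i0 * (D i0).2 = - (W i1 * (D i1).2 + W i2 * (D i2).2).
  by apply/eqP; rewrite -subr_eq0 opprK addrA rel2.
have d1 : (k%:Z %| W i0 * (D i0).1)%Z.
  by rewrite E1 rpredN rpredD // dvdz_mulr.
have d2 : (k%:Z %| W i0 * (D i0).2)%Z.
  by rewrite E2 rpredN rpredD // dvdz_mulr.
move: d1 d2; rewrite /dvdz !unfold_in /= !abszM !absz_nat !Gauss_dvdr // => d1 d2.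
have := Dprim i0; rewrite /primitive => /eqP pr.
by rewrite /coprime -/k; apply/eqP; apply/eqP; rewrite -dvdn1 -pr dvdn_gcd d1 d2.
Qed.

Lemma inL3 (x : lat) : inL D x <->
  exists c0 c1 c2 : int, x = (c0 * (D i0).1 + c1 * (D i1).1 + c2 * (D i2).1,
                             c0 * (D i0).2 + c1 * (D i1).2 + c2 * (D i2).2).
Proof.
split.
- case=> c ->; exists (c i0), (c i1), (c i2); rewrite enum3 /=.
  by rewrite /ladd /lscale /lzero /=; congr pair; ring.
- case=> c0 [c1] [c2] ->.
  exists (fun k => if k == i0 then c0 else if k == i1 then c1 else c2).
  by rewrite enum3 /= /ladd /lscale /lzero /=; congr pair; ring.
Qed.

Lemma kernel0 (y : lat) : det2 (D i0) y = 0 -> exists g : int, y = lscale g (D i0).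
Proof.
have := Dprim i0; rewrite /primitive => /eqP pr.
case: (Bezoutz (D i0).1 (D i0).2) => u [v] Euv.
rewrite /gcdz pr in Euv.
rewrite /det2 => /eqP; rewrite subr_eq0 => /eqP Ey.
exists (u * y.1 + v * y.2).
case: y Ey => y1 y2 /= Ey; rewrite /lscale /=; congr pair.
- transitivity ((u * (D i0).1 + v * (D i0).2) * y1); first by rewrite Euv mul1r.
  have -> : (u * y1 + v * y2) * (D i0).1 = u * (D i0).1 * y1 + v * ((D i0).1 * y2) by ring.
  by rewrite Ey; ring.
- transitivity ((u * (D i0).1 + v * (D i0).2) * y2); first by rewrite Euv mul1r.
  have -> : (u * (D i0).1 + v * (D i0).2) * y2 = u * ((D i0).1 * y2) + v * (D i0).2 * y2 by ring.
  by rewrite Ey; ring.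
Qed.

Lemma inL_det (del : int) : det2 (D i0) (D i1) = W i2 * del ->
  det2 (D i2) (D i0) = W i1 * del ->
  forall x, inL D x <-> (del %| det2 (D i0) x)%Z.
Proof.
move=> E01 E20 x; rewrite inL3; split.
- case=> c0 [c1] [c2] ->; apply/dvdzP; exists (c1 * W i2 - c2 * W i1).
  transitivity (c1 * det2 (D i0) (D i1) - c2 * det2 (D i2) (D i0)).
    by rewrite /det2 /=; ring.
  by rewrite E01 E20; ring.
- case/dvdzP => m Em.
  case: (Bezoutz (W i2) (W i1)) => u [v] Euv.
  have : gcdz (W i2) (W i1) = 1 by rewrite /gcdz !absz_nat gcdnC; have := cop12; rewrite /coprime => /eqP ->.
  move=> G; rewrite G in Euv.
  set y := (x.1 - m * u * (D i1).1 + m * v * (D i2).1, x.2 - m * u * (D i1).2 + m * v * (D i2).2).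
  have : det2 (D i0) y = 0.
    transitivity (det2 (D i0) x - m * u * det2 (D i0) (D i1) - m * v * det2 (D i2) (D i0)).
      by rewrite /det2 /y /=; ring.
    rewrite Em E01 E20.
    transitivity (m * del * (1 - (u * W i2 + v * W i1))); first by ring.
    by rewrite Euv subrr !mulr0.
  case/kernel0 => g Eg.
  exists g, (m * u), (- (m * v)).
  move: Eg; rewrite /y /lscale; case: x {Em y} => x1 x2 /= [] E1 E2.
  congr pair.
  + by rewrite -E1; ring.
  + by rewrite -E2; ring.
Qed.

Lemma orderG_eq (del : int) : det2 (D i0) (D i1) = W i2 * del ->
  det2 (D i2) (D i0) = W i1 * del ->
  forall g, orderG D g -> g = `|del|%N.
Proof.
move=> E01 E20 g [reps [rinj rsurj]].
have delnz : del != 0.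
  by apply: contraNneq span => d0; rewrite /i0 /i1 in E01; rewrite E01 d0 mulr0.
have HL := inL_det E01 E20.
set phi := fun x => det2 (D i0) x.
have phiB : forall x y, det2 (D i0) (ladd x (lscale (-1) y)) = phi x - phi y.
  by move=> [x1 x2] [y1 y2]; rewrite /phi /det2 /=; ring.
have modlt : forall x, (`|(phi x %% del)%Z| < `|del|)%N.
  move=> x; have := ltz_mod (phi x) delnz; have := modz_ge0 (phi x) delnz.
  by move=> h1 h2; rewrite -ltz_nat gez0_abs.
pose f := fun i : 'I_g => Ordinal (modlt (reps i)).
have finj : injective f.
  move=> i j /(congr1 val) /= /eqP.
  rewrite -eqz_nat !gez0_abs ?modz_ge0 // => /eqP Em.
  apply: rinj; apply/HL; rewrite phiB -eqz_mod_dvd; apply/eqP; exact: Em.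
have := Dprim i0; rewrite /primitive => /eqP pr.
case: (Bezoutz (D i0).1 (D i0).2) => u [v] Euv.
rewrite /gcdz pr in Euv.
have fsurj : forall r : 'I_`|del|, r \in codom f.
  move=> r; case: (rsurj (lscale r%:Z (- v, u))) => i /HL.
  rewrite phiB -eqz_mod_dvd => /eqP Em.
  apply/codomP; exists i; apply: val_inj => /=.
  apply/eqP; rewrite -eqz_nat gez0_abs ?modz_ge0 // -Em.
  have -> : phi (lscale r%:Z (- v, u)) = r%:Z * (u * (D i0).1 + v * (D i0).2).
    by rewrite /phi /det2 /=; ring.
  rewrite Euv mulr1.
  move: (ltn_ord r); move: (nat_of_ord r) => n hn.
  have hr : (n%:Z < `|del|) by rewrite -abszE ltz_nat.
  case: (ltrP 0 del) => hd.
  - by rewrite modz_small // -(gtr0_norm hd) hr andbT.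
  - by rewrite -modzN modz_small // -(ler0_norm hd) hr andbT.
have := card_codom finj; rewrite card_ord => Ec.
apply/eqP; rewrite eqn_leq; apply/andP; split.
- by have := max_card (mem (codom f)); rewrite Ec card_ord.
- rewrite -Ec -{1}(card_ord `|del|); apply: subset_leq_card.
  by apply/subsetP => r _; apply: fsurj.
Qed.
End Lat.

Section Cone.
Variables (R : realFieldType) (D : 'I_3 -> lat) (w : 'I_3 -> nat) (del : int).
Hypotheses (wpos : forall k, (0 < w k)%N)
 (rel : weight_relation w D)
 (E01 : det2 (D i0) (D i1) = (w i2)%:Z * del)
 (E12 : det2 (D i1) (D i2) = (w i0)%:Z * del)
 (E20 : det2 (D i2) (D i0) = (w i1)%:Z * del)
 (delnz : del != 0).

Definition Dr (j : 'I_3) : R * R := (((D j).1)%:~R, ((D j).2)%:~R).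
Definition detR (x y : R * R) : R := x.1 * y.2 - x.2 * y.1.
Definition rep (a b : 'I_3) (s t : R) (x : R * R) : Prop :=
  0 < s /\ 0 < t /\ x = (t * (Dr b).1 - s * (Dr a).1, t * (Dr b).2 - s * (Dr a).2).

Notation wR k := ((w k)%:R : R).
Notation dR := (del%:~R : R).

Lemma wRpos k : 0 < wR k.
Proof. by rewrite ltr0n. Qed.
Lemma dRnz : dR != 0.
Proof. by rewrite intr_eq0. Qed.

Lemma detR_Dr a b : detR (Dr a) (Dr b) = (det2 (D a) (D b))%:~R.
Proof. by rewrite /detR /det2 /= intrB !intrM. Qed.

Lemma relR1 : wR i0 * (Dr i0).1 + wR i1 * (Dr i1).1 + wR i2 * (Dr i2).1 = 0.
Proof.
have := congr1 (fun z : int => z%:~R : R) (rel1 rel); rewrite /= !intrD !intrM /= mulr0z.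
by [].
Qed.
Lemma relR2 : wR i0 * (Dr i0).2 + wR i1 * (Dr i1).2 + wR i2 * (Dr i2).2 = 0.
Proof.
have := congr1 (fun z : int => z%:~R : R) (rel2 rel); rewrite /= !intrD !intrM /= mulr0z.
by [].
Qed.

Lemma d01 : detR (Dr i0) (Dr i1) = wR i2 * dR.
Proof. by rewrite detR_Dr E01 intrM. Qed.
Lemma d12 : detR (Dr i1) (Dr i2) = wR i0 * dR.
Proof. by rewrite detR_Dr E12 intrM. Qed.
Lemma d20 : detR (Dr i2) (Dr i0) = wR i1 * dR.
Proof. by rewrite detR_Dr E20 intrM. Qed.

Definition yv (x : R * R) j := detR x (Dr j).
Definition zz (x : R * R) j := yv x j * dR.
Definition choice (x : R * R) : 'I_3 * 'I_3 :=
  if 0 < zz x i0 then (if 0 < zz x i1 then (i1, i0) else if 0 < zz x i2 then (i0, i2) else (i1, i2))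
  else (if zz x i1 < 0 then (i0, i1) else if 0 < zz x i2 then (i2, i1) else (i2, i0)).

Lemma detR_swap (u v : R * R) : detR u v = - detR v u.
Proof. by rewrite /detR; ring. Qed.

Lemma posdiv (u v : R) : 0 < u * v -> 0 < u / v.
Proof.
move=> h; have vnz : v != 0 by apply: contraTneq h => ->; rewrite mulr0 ltxx.
have -> : u / v = (u * v) / (v * v) by field.
by apply: divr_gt0 => //; rewrite lt0r mulf_neq0 //= -expr2 sqr_ge0.
Qed.

Lemma posA y k : 0 < wR k -> 0 < y * dR -> 0 < y / (wR k * dR).
Proof. by move=> hw hy; apply: posdiv; rewrite mulrCA mulr_gt0. Qed.
Lemma posB y k : 0 < wR k -> y * dR < 0 -> 0 < y / - (wR k * dR).
Proof. by move=> hw hy; apply: posdiv; rewrite mulrN mulrCA -mulrN mulr_gt0 // oppr_gt0. Qed.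

Lemma cramer a b x : detR (Dr b) (Dr a) != 0 ->
  x = ((yv x a / detR (Dr b) (Dr a)) * (Dr b).1 - (yv x b / detR (Dr b) (Dr a)) * (Dr a).1,
       (yv x a / detR (Dr b) (Dr a)) * (Dr b).2 - (yv x b / detR (Dr b) (Dr a)) * (Dr a).2).
Proof.
move=> h; case: x => x1 x2; move: h; rewrite /yv /detR /= => h.
by congr pair; field.
Qed.

Lemma zrel x : wR i0 * zz x i0 + wR i1 * zz x i1 + wR i2 * zz x i2 = 0.
Proof.
rewrite /zz /yv /detR.
have -> : wR i0 * ((x.1 * (Dr i0).2 - x.2 * (Dr i0).1) * dR) +
    wR i1 * ((x.1 * (Dr i1).2 - x.2 * (Dr i1).1) * dR) +
    wR i2 * ((x.1 * (Dr i2).2 - x.2 * (Dr i2).1) * dR) =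
  dR * (x.1 * (wR i0 * (Dr i0).2 + wR i1 * (Dr i1).2 + wR i2 * (Dr i2).2)
      - x.2 * (wR i0 * (Dr i0).1 + wR i1 * (Dr i1).1 + wR i2 * (Dr i2).1)) by ring.
by rewrite relR1 relR2; ring.
Qed.

Lemma cone_ex x : (forall j, yv x j != 0) ->
  exists a b s t, a != b /\ rep a b s t x.
Proof.
move=> gen.
have gz : forall j, zz x j != 0 by move=> j; rewrite /zz mulf_neq0 // dRnz.
have w0 := wRpos i0; have w1 := wRpos i1; have w2 := wRpos i2.
have zr := zrel x.
have sg : forall j, 0 < zz x j \/ zz x j < 0.
  by move=> j; have := gz j; case: ltrgtP => //; auto.
have D01 : detR (Dr i0) (Dr i1) = wR i2 * dR := d01.
have D10 : detR (Dr i1) (Dr i0) = - (wR i2 * dR) by rewrite detR_swap d01.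
have D12 : detR (Dr i1) (Dr i2) = wR i0 * dR := d12.
have D21 : detR (Dr i2) (Dr i1) = - (wR i0 * dR) by rewrite detR_swap d12.
have D20 : detR (Dr i2) (Dr i0) = wR i1 * dR := d20.
have D02 : detR (Dr i0) (Dr i2) = - (wR i1 * dR) by rewrite detR_swap d20.
have nz : forall k, wR k * dR != 0 by move=> k; rewrite mulf_neq0 ?dRnz // gt_eqF ?wRpos.
have nzN : forall k, - (wR k * dR) != 0 by move=> k; rewrite oppr_eq0 nz.
case: (sg i0) => h0; case: (sg i1) => h1; case: (sg i2) => h2.
- exists i1, i0, (yv x i0 / detR (Dr i0) (Dr i1)), (yv x i1 / detR (Dr i0) (Dr i1)).
  split => //; split; last split; last (apply: cramer; rewrite D01 nz //).
  + by rewrite D01; apply: posA.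
  + by rewrite D01; apply: posA.
- exists i1, i0, (yv x i0 / detR (Dr i0) (Dr i1)), (yv x i1 / detR (Dr i0) (Dr i1)).
  split => //; split; last split; last (apply: cramer; rewrite D01 nz //).
  + by rewrite D01; apply: posA.
  + by rewrite D01; apply: posA.
- exists i0, i2, (yv x i2 / detR (Dr i2) (Dr i0)), (yv x i0 / detR (Dr i2) (Dr i0)).
  split => //; split; last split; last (apply: cramer; rewrite D20 nz //).
  + by rewrite D20; apply: posA.
  + by rewrite D20; apply: posA.
- exists i1, i2, (yv x i2 / detR (Dr i2) (Dr i1)), (yv x i1 / detR (Dr i2) (Dr i1)).
  split => //; split; last split; last (apply: cramer; rewrite D21 nzN //).
  + by rewrite D21; apply: posB.
  + by rewrite D21; apply: posB.
- exists i2, i1, (yv x i1 / detR (Dr i1) (Dr i2)), (yv x i2 / detR (Dr i1) (Dr i2)).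
  split => //; split; last split; last (apply: cramer; rewrite D12 nz //).
  + by rewrite D12; apply: posA.
  + by rewrite D12; apply: posA.
- exists i2, i0, (yv x i0 / detR (Dr i0) (Dr i2)), (yv x i2 / detR (Dr i0) (Dr i2)).
  split => //; split; last split; last (apply: cramer; rewrite D02 nzN //).
  + by rewrite D02; apply: posB.
  + by rewrite D02; apply: posB.
- exists i0, i1, (yv x i1 / detR (Dr i1) (Dr i0)), (yv x i0 / detR (Dr i1) (Dr i0)).
  split => //; split; last split; last (apply: cramer; rewrite D10 nzN //).
  + by rewrite D10; apply: posB.
  + by rewrite D10; apply: posB.
- exists i0, i1, (yv x i1 / detR (Dr i1) (Dr i0)), (yv x i0 / detR (Dr i1) (Dr i0)).
  split => //; split; last split; last (apply: cramer; rewrite D10 nzN //).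
  + by rewrite D10; apply: posB.
  + by rewrite D10; apply: posB.
Qed.

Lemma sgA t k : 0 < t -> 0 < t * (wR k * dR) * dR.
Proof.
move=> ht; rewrite -mulrA mulr_gt0 // -mulrA mulr_gt0 ?wRpos //.
by rewrite lt0r mulf_neq0 ?dRnz //= -expr2 sqr_ge0.
Qed.
Lemma sgB t k : 0 < t -> t * (- (wR k * dR)) * dR < 0.
Proof. by move=> ht; rewrite mulrN mulNr oppr_lt0 sgA. Qed.

Ltac decide_choice :=
  rewrite /choice; repeat (case: ifP; [move=> ?|move/negbT; rewrite -leNgt => ?]);
  try (by []); exfalso; lra.

Lemma cone_uniq a b s t x : a != b -> rep a b s t x ->
  choice x = (a, b) /\ s = yv x b / detR (Dr b) (Dr a) /\ t = yv x a / detR (Dr b) (Dr a).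
Proof.
move=> ab [hs [ht Ex]].
have Ya : yv x a = t * detR (Dr b) (Dr a) by rewrite Ex /yv /detR /=; ring.
have Yb : yv x b = s * detR (Dr b) (Dr a) by rewrite Ex /yv /detR /=; ring.
have Za : zz x a = t * detR (Dr b) (Dr a) * dR by rewrite /zz Ya.
have Zb : zz x b = s * detR (Dr b) (Dr a) * dR by rewrite /zz Yb.
have w0 := wRpos i0; have w1 := wRpos i1; have w2 := wRpos i2.
have zr := zrel x.
have nz : forall k, wR k * dR != 0 by move=> k; rewrite mulf_neq0 ?dRnz // gt_eqF ?wRpos.
have nzN : forall k, - (wR k * dR) != 0 by move=> k; rewrite oppr_eq0 nz.
have D10 : detR (Dr i1) (Dr i0) = - (wR i2 * dR) by rewrite detR_swap d01.
have D21 : detR (Dr i2) (Dr i1) = - (wR i0 * dR) by rewrite detR_swap d12.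
have D02 : detR (Dr i0) (Dr i2) = - (wR i1 * dR) by rewrite detR_swap d20.
have [Ea|[Ea|Ea]] := ord3P a; have [Eb|[Eb|Eb]] := ord3P b; subst a b => //.
- rewrite D10 in Ya Yb Za Zb.
  have h0 := sgB i2 ht; have h1 := sgB i2 hs; rewrite -Za in h0; rewrite -Zb in h1.
  split; [decide_choice | by rewrite D10 Ya Yb !mulfK].
- rewrite d20 in Ya Yb Za Zb.
  have h0 := sgA i1 ht; have h2 := sgA i1 hs; rewrite -Za in h0; rewrite -Zb in h2.
  have h1 : zz x i1 < 0 by nra.
  split; [decide_choice | by rewrite d20 Ya Yb !mulfK].
- rewrite d01 in Ya Yb Za Zb.
  have h1 := sgA i2 ht; have h0 := sgA i2 hs; rewrite -Za in h1; rewrite -Zb in h0.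
  split; [decide_choice | by rewrite d01 Ya Yb !mulfK].
- rewrite D21 in Ya Yb Za Zb.
  have h1 := sgB i0 ht; have h2 := sgB i0 hs; rewrite -Za in h1; rewrite -Zb in h2.
  have h0 : 0 < zz x i0 by nra.
  split; [decide_choice | by rewrite D21 Ya Yb !mulfK].
- rewrite D02 in Ya Yb Za Zb.
  have h2 := sgB i1 ht; have h0 := sgB i1 hs; rewrite -Za in h2; rewrite -Zb in h0.
  have h1 : 0 < zz x i1 by nra.
  split; [decide_choice | by rewrite D02 Ya Yb !mulfK].
- rewrite d12 in Ya Yb Za Zb.
  have h2 := sgA i0 ht; have h1 := sgA i0 hs; rewrite -Za in h2; rewrite -Zb in h1.
  have h0 : zz x i0 < 0 by nra.
  split; [decide_choice | by rewrite d12 Ya Yb !mulfK].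
Qed.
End Cone.

Lemma enumI2 : enum 'I_2 = [:: ord0; ord_max].
Proof. by apply: (inj_map val_inj); rewrite val_enum_ord. Qed.
Lemma enum_leg : enum {: 'I_2 + 'I_3} = [:: inl ord0; inl ord_max; inr i0; inr i1; inr i2].
Proof. by rewrite enumT unlock /= /sum_enum -!enumT enumI2 enum3. Qed.


Lemma lsum_map_filter_fst (T : finType) (P : pred T) (f : T -> lat) :
  (lsum [seq f x | x <- enum T & P x]).1 = \sum_(x | P x) (f x).1.
Proof. by rewrite lsum_fst big_map big_filter big_enum_cond. Qed.
Lemma lsum_map_filter_snd (T : finType) (P : pred T) (f : T -> lat) :
  (lsum [seq f x | x <- enum T & P x]).2 = \sum_(x | P x) (f x).2.
Proof. by rewrite lsum_snd big_map big_filter big_enum_cond. Qed.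

Lemma sum3c (P : pred 'I_3) (F : 'I_3 -> int) :
  \sum_(j < 3 | P j) F j = (if P i0 then F i0 else 0) + (if P i1 then F i1 else 0) + (if P i2 then F i2 else 0).
Proof. by rewrite big_mkcond sum3. Qed.

Section Flux.
Variables (R : realFieldType) (D : 'I_3 -> lat) (w : 'I_3 -> nat) (d : nat) (C : tcurve R).

Definition sgtu (e : tE C) (v : tV C) : lat := if tsrc e == v then tu e else lscale (-1) (tu e).

Lemma flux_fst v : (flux D w d v).1 =
  \sum_(e | incid e v) (tw e)%:Z * (sgtu e v).1 +
  \sum_(j < 3 | tleg C (inr j) == v) (d * w j)%N%:Z * (D j).1.
Proof.
rewrite /flux /= lsum_map_filter_fst lsum_map_filter_fst big_sumType /=.
congr (_ + _); rewrite (eq_bigr (fun _ => 0)) ?big1_eq ?add0r // => i _; exact: mul0r.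
Qed.
Lemma flux_snd v : (flux D w d v).2 =
  \sum_(e | incid e v) (tw e)%:Z * (sgtu e v).2 +
  \sum_(j < 3 | tleg C (inr j) == v) (d * w j)%N%:Z * (D j).2.
Proof.
rewrite /flux /= lsum_map_filter_snd lsum_map_filter_snd big_sumType /=.
congr (_ + _); rewrite (eq_bigr (fun _ => 0)) ?big1_eq ?add0r // => i _; exact: mul0r.
Qed.
End Flux.

Section Concrete.
Variables (R : realFieldType) (D : 'I_3 -> lat) (w : 'I_3 -> nat) (d : nat).
Variables (a b : 'I_3) (q : R * R) (s t : R).

Definition mkC : tcurve R :=
  @TCurve R 'I_3 'I_2 (fun _ => i0) (fun e => if e == ord0 then i1 else i2)
    (fun e => if e == ord0 then (d * w a)%N else (d * w b)%N)
    (fun e => if e == ord0 then D a else D b)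
    (fun v => if v == i0 then q else if v == i1 then (q.1 + s * (Dr R D a).1, q.2 + s * (Dr R D a).2)
              else (q.1 + t * (Dr R D b).1, q.2 + t * (Dr R D b).2))
    (fun l => match l with inl i => if i == ord0 then i1 else i2
              | inr j => if j == a then i1 else if j == b then i2 else i0 end).

End Concrete.

Lemma ord2P (e : 'I_2) : e = ord0 \/ e = ord_max.
Proof. by case: e => [[|[|m]] H]; [left|right|]; try apply: val_inj. Qed.

Lemma mkC_tree R D w d a b q s t : is_tree (@mkC R D w d a b q s t).
Proof.
rewrite /is_tree; apply/andP; split; first (apply/andP; split).
- by apply/forallP => e; have [->|->] := ord2P e.
- by rewrite /= !card_ord.
- have c0 : forall v : 'I_3, connect (tadj (C:=@mkC R D w d a b q s t)) i0 v.
    move=> v; have [->|[->|->]] := ord3P v; first exact: connect0.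
    + by apply: connect1; apply/existsP; exists ord0.
    + by apply: connect1; apply/existsP; exists ord_max.
  have c1 : forall v : 'I_3, connect (tadj (C:=@mkC R D w d a b q s t)) v i0.
    move=> v; have [->|[->|->]] := ord3P v; first exact: connect0.
    + by apply: connect1; apply/existsP; exists ord0.
    + by apply: connect1; apply/existsP; exists ord_max.
  apply/forallP => u; apply/forallP => v.
  exact: connect_trans (c1 u) (c0 v).
Qed.

Lemma card_I2 (P : pred 'I_2) : #|P| = (P ord0 + P ord_max)%N.
Proof. by rewrite cardE /enum_mem -enumT enumI2 /= !unfold_in; case: (P ord0); case: (P ord_max). Qed.
Lemma card_I3 (P : pred 'I_3) : #|P| = (P i0 + P i1 + P i2)%N.
Proof. by rewrite cardE /enum_mem -enumT enum3 /= !unfold_in; case: (P i0); case: (P i1); case: (P i2). Qed.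
Lemma card_leg (P : pred ('I_2 + 'I_3)) : #|P| =
  (P (inl ord0) + P (inl ord_max) + P (inr i0) + P (inr i1) + P (inr i2))%N.
Proof. by rewrite cardE /enum_mem -enumT enum_leg /= !unfold_in;
  case: (P (inl ord0)); case: (P (inl ord_max)); case: (P (inr i0)); case: (P (inr i1)); case: (P (inr i2)). Qed.

Lemma mkC_valence R D w d a b q s t v : a != b -> (3 <= valence (C:=@mkC R D w d a b q s t) v)%N.
Proof.
rewrite /valence card_I2 card_leg.
by have [->|[->|->]] := ord3P a; have [->|[->|->]] := ord3P b => //; have [->|[->|->]] := ord3P v.
Qed.

Lemma sum2 (F : 'I_2 -> int) : \sum_(e < 2) F e = F ord0 + F ord_max.
Proof. by rewrite -big_enum /= enumI2 !big_cons big_nil addr0. Qed.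

Lemma mkC_inTq (R : realFieldType) D w d (a b : 'I_3) (q : R * R) (s t : R) (p1 p2 : R * R) :
  (forall k, 0 < w k)%N -> (1 <= d)%N -> (forall k, primitive (D k)) -> weight_relation w D ->
  a != b -> 0 < s -> 0 < t ->
  p1 = (q.1 + s * (Dr R D a).1, q.2 + s * (Dr R D a).2) ->
  p2 = (q.1 + t * (Dr R D b).1, q.2 + t * (Dr R D b).2) ->
  in_Tq D w d p1 p2 (@mkC R D w d a b q s t).
Proof.
move=> wpos d1 Dprim rel ab hs ht E1 E2.
have r1 := rel1 rel; have r2 := rel2 rel.
have dw : forall j, (0 < d * w j)%N by move=> j; rewrite muln_gt0 d1 wpos.
split; first exact: mkC_tree.
split; first by move=> v; exact: mkC_valence.
split.
  move=> e; rewrite /edge_ok /=.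
  have [->|->] := ord2P e => /=; rewrite -[(_ == 0)%N]negbK -lt0n dw /=.
  + by split; [exact: Dprim | exists s].
  + by split; [exact: Dprim | exists t].
split.
  move=> v; apply: injective_projections.
  - rewrite flux_fst big_mkcond sum2 sum3c /=.
    have [Ea|[Ea|Ea]] := ord3P a; have [Eb|[Eb|Eb]] := ord3P b; subst a b => //;
    have [->|[->|->]] := ord3P v => /=;
    first [ring | (transitivity (d%:Z * ((w i0)%:Z * (D i0).1 + (w i1)%:Z * (D i1).1 + (w i2)%:Z * (D i2).1));
                   [ring | by rewrite r1 mulr0])].
  - rewrite flux_snd big_mkcond sum2 sum3c /=.
    have [Ea|[Ea|Ea]] := ord3P a; have [Eb|[Eb|Eb]] := ord3P b; subst a b => //;
    have [->|[->|->]] := ord3P v => /=;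
    first [ring | (transitivity (d%:Z * ((w i0)%:Z * (D i0).2 + (w i1)%:Z * (D i1).2 + (w i2)%:Z * (D i2).2));
                   [ring | by rewrite r2 mulr0])].
split; first by rewrite E1.
split; first by rewrite E2.
rewrite /pos_valence card_I2 card_leg /=.
by have [Ea|[Ea|Ea]] := ord3P a; have [Eb|[Eb|Eb]] := ord3P b; subst a b => //=; rewrite !dw.
Qed.

Lemma prod3 (w : 'I_3 -> nat) : (\prod_(k < 3) w k = w i0 * w i1 * w i2)%N.
Proof. by rewrite -big_enum /= enum3 !big_cons big_nil muln1 mulnA. Qed.

Ltac solve_l2 D w d del E01 E12 E20 :=
  match goal with |- (`|?X|%N = _) =>
    first
    [ have -> : X = ((d * d) * (w i0 * w i1))%N%:Z * det2 (D i0) (D i1) by rewrite /det2; ring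
    | have -> : X = - (((d * d) * (w i0 * w i1))%N%:Z * det2 (D i0) (D i1)) by rewrite /det2; ring
    | have -> : X = ((d * d) * (w i1 * w i2))%N%:Z * det2 (D i1) (D i2) by rewrite /det2; ring
    | have -> : X = - (((d * d) * (w i1 * w i2))%N%:Z * det2 (D i1) (D i2)) by rewrite /det2; ring
    | have -> : X = ((d * d) * (w i2 * w i0))%N%:Z * det2 (D i2) (D i0) by rewrite /det2; ring
    | have -> : X = - (((d * d) * (w i2 * w i0))%N%:Z * det2 (D i2) (D i0)) by rewrite /det2; ring ];
    rewrite ?E01 ?E12 ?E20 ?abszN !abszM !absz_nat prod3; ring
  end.

Ltac solve_sum r1 r2 D w d :=
  first [ring | (transitivity (d%:Z * ((w i0)%:Z * (D i0).1 + (w i1)%:Z * (D i1).1 + (w i2)%:Z * (D i2).1));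
                   [ring | by rewrite r1 mulr0])
            | (transitivity (d%:Z * ((w i0)%:Z * (D i0).2 + (w i1)%:Z * (D i1).2 + (w i2)%:Z * (D i2).2));
                   [ring | by rewrite r2 mulr0])].

Lemma mkC_index (R : realFieldType) D w d (a b : 'I_3) (q : R * R) (s t : R) (del : int) :
  weight_relation w D -> a != b ->
  det2 (D i0) (D i1) = (w i2)%:Z * del ->
  det2 (D i1) (D i2) = (w i0)%:Z * del ->
  det2 (D i2) (D i0) = (w i1)%:Z * del ->
  forall v, has_index (zeta_sink D w d (C := @mkC R D w d a b q s t) v)
                      (`|del| * (\prod_(k < 3) w k) * d ^ 2)%N.
Proof.
move=> rel ab E01 E12 E20 v.
have r1 := rel1 rel; have r2 := rel2 rel.
rewrite /zeta_sink card_ord /=.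
have [Ea|[Ea|Ea]] := ord3P a; have [Eb|[Eb|Eb]] := ord3P b; subst a b => //;
have [->|[->|->]] := ord3P v; simpl; rewrite !enum_leg !enumI2; simpl;
cbv [has_index mprod ell wedge contract det2 lscale ladd lzero lsum lam1 vol foldr map fst snd l0 l1 l2];
(split; [|split; [try ring|split; [try (apply: injective_projections => /=; ring)|]]]).
all: try (apply: injective_projections => /=; solve_sum r1 r2 D w d).
all: solve_l2 D w d del E01 E12 E20.
Qed.

Lemma card_as_sum (T : finType) (P : pred T) : #|P| = (\sum_(x : T) (P x : nat))%N.
Proof.
rewrite -sum1_card big_mkcond /=; apply: eq_bigr => x _.
by rewrite unfold_in; case: (P x).
Qed.

Lemma handshake (R : realFieldType) (C : tcurve R) : (forall e : tE C, tsrc e != ttgt e) ->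
  (\sum_(v : tV C) valence v = 2 * #|tE C| + 5)%N.
Proof.
move=> nl; rewrite /valence big_split /=; congr (_ + _)%N.
- rewrite (eq_bigr (fun v => \sum_(e : tE C) (incid e v : nat))%N); last first.
    by move=> v _; rewrite card_as_sum.
  rewrite exchange_big /= mulnC -sum_nat_const; apply: eq_bigr => e _.
  rewrite -(card_as_sum [pred v | incid e v]).
  have := cards2 (tsrc e) (ttgt e); rewrite nl => <-; apply: eq_card => v.
  by rewrite !inE /incid (eq_sym v) (eq_sym v).
- rewrite (eq_bigr (fun v => \sum_(l : 'I_2 + 'I_3) (tleg C l == v : nat))%N); last first.
    by move=> v _; rewrite card_as_sum.
  rewrite exchange_big /=.
  rewrite (eq_bigr (fun _ => 1%N)); last first.
    move=> l _; rewrite -(card_as_sum [pred v | tleg C l == v]).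
    by rewrite -(card1 (tleg C l)); apply: eq_card => v; rewrite !inE eq_sym.
  by rewrite sum1_card card_sum !card_ord.
Qed.

Lemma edge_bound (R : realFieldType) (C : tcurve R) : is_tree C ->
  (forall v : tV C, 3 <= valence v)%N -> (#|tE C| <= 2)%N /\ #|tV C| = (#|tE C|).+1.
Proof.
case/andP => /andP [/forallP nl /eqP ce] _ val.
have h := handshake nl.
have : (\sum_(v : tV C) 3 <= \sum_(v : tV C) valence v)%N by apply: leq_sum => v _; exact: val.
rewrite h sum_nat_const -ce => H; split => //; lia.
Qed.

Lemma one_elem (T : finType) (u v : T) : #|T| = 1%N -> u = v.
Proof. move=> h; have /fintype_le1P H : (#|T| <= 1)%N by rewrite h. exact: H. Qed.

Lemma third_elem (T : finType) (x y : T) : #|T| = 3%N -> x != y ->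
  exists z, [/\ z != x, z != y & forall v, v = x \/ v = y \/ v = z].
Proof.
rewrite cardT => h xy.
have mx := mem_enum T x; have my := mem_enum T y.
have U := enum_uniq T.
have mall := mem_enum T.
move: h mx my U mall; case: (enum T) => [|e1 [|e2 [|e3 [|e4 l]]]] //= _.
rewrite ?inE => mx my U mall.
move: U; rewrite ?inE !negb_or => /andP [/andP [n12 n13] /andP [n23 _]].
have n21 : e2 != e1 by rewrite eq_sym.
have n31 : e3 != e1 by rewrite eq_sym.
have n32 : e3 != e2 by rewrite eq_sym.
have cov : forall v, v = e1 \/ v = e2 \/ v = e3.
  by move=> v; have := mall v; rewrite ?inE => /orP [/eqP ->|/orP [/eqP ->|/eqP ->]]; auto.
move: mx my; rewrite ?inE; move=> /orP [/eqP ex|/orP [/eqP ex|/eqP ex]] /orP [/eqP ey|/orP [/eqP ey|/eqP ey]];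
  subst x y; rewrite ?eqxx // in xy.
- exists e3; split => //; move=> v; case: (cov v) => [->|[->|->]]; auto.
- exists e2; split => //; move=> v; case: (cov v) => [->|[->|->]]; auto.
- exists e3; split => //; move=> v; case: (cov v) => [->|[->|->]]; auto.
- exists e1; split => //; move=> v; case: (cov v) => [->|[->|->]]; auto.
- exists e2; split => //; move=> v; case: (cov v) => [->|[->|->]]; auto.
- exists e1; split => //; move=> v; case: (cov v) => [->|[->|->]]; auto.
Qed.

Lemma two_elems_ex (T : finType) : #|T| = 2%N -> exists u v : T, u != v /\ forall z, z = u \/ z = v.
Proof.
rewrite cardT => h.
have U := enum_uniq T; have mall := mem_enum T.
move: h U mall; case: (enum T) => [|e1 [|e2 [|e3 l]]] //= _.
rewrite ?inE andbT => n12 mall; exists e1, e2; split => // z.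
by have := mall z; rewrite ?inE => /orP [/eqP ->|/eqP ->]; auto.
Qed.

Lemma two_elems (T : finType) (u v : T) : #|T| = 2%N -> u != v -> forall z, z = u \/ z = v.
Proof.
move=> h uv z; have [e1 [e2 [n12 H]]] := two_elems_ex h.
by case: (H u) uv => ->; case: (H v) => -> uv; rewrite ?eqxx // in uv; case: (H z) => ->; auto.
Qed.

Lemma cover3 (a b c : 'I_3) : a != b -> a != c -> b != c -> forall j, j = a \/ j = b \/ j = c.
Proof.
move=> ab ac bc j.
have [Ea|[Ea|Ea]] := ord3P a; have [Eb|[Eb|Eb]] := ord3P b; have [Ec|[Ec|Ec]] := ord3P c;
  subst a b c; try (by []);
  have [->|[->|->]] := ord3P j; auto.
Qed.

Definition dx (R : realFieldType) (p1 p2 : R * R) : R * R := (p2.1 - p1.1, p2.2 - p1.2).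

Section Analysis.
Variables (R : realFieldType) (D : 'I_3 -> lat) (w : 'I_3 -> nat) (d : nat) (p1 p2 : R * R).
Hypotheses (wpos : forall k, (0 < w k)%N) (d1 : (1 <= d)%N) (Dprim : forall k, primitive (D k))
  (rel : weight_relation w D).
Hypothesis gen : forall j, yv D (dx p1 p2) j != 0.
Variable C : tcurve R.
Hypothesis HC : in_Tq D w d p1 p2 C.

Notation wR k := ((w k)%:R : R).
Notation y j := (yv D (dx p1 p2) j).

Lemma yrel : wR i0 * y i0 + wR i1 * y i1 + wR i2 * y i2 = 0.
Proof.
rewrite /yv /detR.
transitivity ((dx p1 p2).1 * (wR i0 * (Dr R D i0).2 + wR i1 * (Dr R D i1).2 + wR i2 * (Dr R D i2).2)
   - (dx p1 p2).2 * (wR i0 * (Dr R D i0).1 + wR i1 * (Dr R D i1).1 + wR i2 * (Dr R D i2).1)).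
  by ring.
by rewrite (relR1 R rel) (relR2 R rel); ring.
Qed.

Lemma wRnz k : wR k != 0.
Proof. by rewrite pnatr_eq0 -lt0n. Qed.

Lemma mixed_contra (b0 b1 b2 : bool) : ~~ [&& b0, b1 & b2] -> [|| b0, b1 | b2] ->
  (if b0 then wR i0 * y i0 else 0) + (if b1 then wR i1 * y i1 else 0) +
  (if b2 then wR i2 * y i2 else 0) = 0 -> False.
Proof.
have h0 : wR i0 * y i0 != 0 by rewrite mulf_neq0 ?wRnz ?gen.
have h1 : wR i1 * y i1 != 0 by rewrite mulf_neq0 ?wRnz ?gen.
have h2 : wR i2 * y i2 != 0 by rewrite mulf_neq0 ?wRnz ?gen.
have yr := yrel.
move: h0 h1 h2 yr.
set A := wR i0 * y i0; set B := wR i1 * y i1; set E := wR i2 * y i2.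
move=> h0 h1 h2 yr.
case: b0; case: b1; case: b2 => //= _ _ H.
- by move/eqP: h2; apply; lra.
- by move/eqP: h1; apply; lra.
- by move/eqP: h0; apply; lra.
- by move/eqP: h0; apply; lra.
- by move/eqP: h1; apply; lra.
- by move/eqP: h2; apply; lra.
Qed.

Lemma p12_neq : p1 <> p2.
Proof.
move=> E; have := gen i0; rewrite /yv /detR /dx E !subrr !mul0r subrr.
by rewrite eqxx.
Qed.

Lemma tree_nl : forall e : tE C, tsrc e != ttgt e.
Proof. by case: HC => /andP [/andP [/forallP nl _] _] _. Qed.

Lemma flux_leaf_comp (u : tV C) (e : tE C) : (forall e', incid e' u -> e' = e) -> incid e u ->
  (tw e)%:Z * (sgtu e u).1 + d%:Z * (\sum_(j < 3 | tleg C (inr j) == u) (w j)%:Z * (D j).1) = 0 /\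
  (tw e)%:Z * (sgtu e u).2 + d%:Z * (\sum_(j < 3 | tleg C (inr j) == u) (w j)%:Z * (D j).2) = 0.
Proof.
move=> Honly iu.
have [_ [_ [_ [bal _]]]] := HC.
have F := bal u.
have P1 : [pred e' | incid e' u] =1 pred1 e.
  by move=> e'; rewrite /= ; apply/idP/eqP => [/Honly|->].
split.
- have := congr1 fst F; rewrite flux_fst (big_pred1 e P1) => H.
  apply: etrans H;   by rewrite big_distrr /=; congr (_ + _); apply: eq_bigr => j _; rewrite PoszM mulrA.
- have := congr1 snd F; rewrite flux_snd (big_pred1 e P1) => H.
  apply: etrans H;   by rewrite big_distrr /=; congr (_ + _); apply: eq_bigr => j _; rewrite PoszM mulrA.
Qed.

Lemma pos_legs : tpos (tleg C mP1) = p1 /\ tpos (tleg C mP2) = p2.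
Proof. by have [_ [_ [_ [_ [h1 [h2 _]]]]]] := HC. Qed.

Lemma leaf_contra (e : tE C) (u v : tV C) :
  ((tsrc e = u /\ ttgt e = v) \/ (tsrc e = v /\ ttgt e = u)) ->
  ((u = tleg C mP1 /\ v = tleg C mP2) \/ (u = tleg C mP2 /\ v = tleg C mP1)) ->
  (forall e', incid e' u -> e' = e) -> False.
Proof.
move=> Hend Hass Honly.
have iu : incid e u by rewrite /incid; case: Hend => [[-> _]|[_ ->]]; rewrite eqxx ?orbT.
have [F1 F2] := flux_leaf_comp Honly iu.
have [P1e P2e] := pos_legs.
have [_ [_ [eok _]]] := HC.
have := eok e; rewrite /edge_ok; case: ifP => [/eqP tw0 | twn].
  move=> Ep; apply: p12_neq.
  case: Hass => [[Eu Ev]|[Eu Ev]]; rewrite -P1e -P2e -Eu -Ev;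
  case: Hend => [[Es Et]|[Es Et]]; rewrite -Es -Et Ep //.
case=> prim [tau [htau Ep]].
have twnz : (tw e)%:Z != 0 by rewrite eqz_nat twn.
set s1 := \sum_(j < 3 | tleg C (inr j) == u) (w j)%:Z * (D j).1 in F1.
set s2 := \sum_(j < 3 | tleg C (inr j) == u) (w j)%:Z * (D j).2 in F2.
have Zs : det2 (sgtu e u) (s1, s2) = 0.
  apply: (mulfI twnz); rewrite mulr0.
  have -> : (tw e)%:Z * det2 (sgtu e u) (s1, s2) =
    ((tw e)%:Z * (sgtu e u).1 + d%:Z * s1) * s2 - ((tw e)%:Z * (sgtu e u).2 + d%:Z * s2) * s1
    by rewrite /det2 /=; ring.
  by rewrite F1 F2 !mul0r subrr.
have Z : det2 (tu e) (s1, s2) = 0.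
  move: Zs; rewrite /sgtu; case: (tsrc e == u) => //.
  by rewrite /det2 /=; move=> H; rewrite -oppr0 -H; ring.
have X : exists c : R, dx p1 p2 = (c * ((tu e).1)%:~R, c * ((tu e).2)%:~R).
  rewrite /dx -P1e -P2e.
  case: Hass => [[Eu Ev]|[Eu Ev]]; rewrite -Eu -Ev;
  case: Hend => [[Es Et]|[Es Et]]; rewrite -Es -Et Ep /=.
  - by exists tau; congr pair; ring.
  - by exists (- tau); congr pair; ring.
  - by exists (- tau); congr pair; ring.
  - by exists tau; congr pair; ring.
have detz : detR (dx p1 p2) (s1%:~R, s2%:~R) = 0.
  case: X => c ->; rewrite /detR /=.
  transitivity (c * (det2 (tu e) (s1, s2))%:~R); last by rewrite Z mulr0.
  by rewrite /det2 /= intrB !intrM; ring.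
have tunz := prim_nz prim.
have sgz : (sgtu e u).1 = 0 -> (sgtu e u).2 = 0 -> False.
  move: tunz; rewrite /sgtu; case: (tsrc e == u); case: (tu e) => t1 t2 /= tunz h1 h2; apply: tunz.
  - by rewrite h1 h2.
  - by move: h1 h2; rewrite !mulN1r => /eqP; rewrite oppr_eq0 => /eqP -> /eqP; rewrite oppr_eq0 => /eqP ->.
move: F1 F2 detz; rewrite /s1 /s2 !sum3c.
have r1 := rel1 rel; have r2 := rel2 rel.
case E0 : (tleg C (inr i0) == u); case E1 : (tleg C (inr i1) == u); case E2 : (tleg C (inr i2) == u);
  rewrite /=.
- move=> F1 F2 _; apply: sgz.
  + by apply: (mulfI twnz); rewrite mulr0 -[RHS]F1 r1; ring.
  + by apply: (mulfI twnz); rewrite mulr0 -[RHS]F2 r2; ring.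
all: try (move=> _ _ H; apply: (@mixed_contra (tleg C (inr i0) == u) (tleg C (inr i1) == u) (tleg C (inr i2) == u));
  rewrite ?E0 ?E1 ?E2 //= -[RHS]H /yv /detR /Dr /dx /= ?intrD ?intrM ?mulr0z; ring).
move=> F1 F2 _; apply: sgz.
+ by apply: (mulfI twnz); rewrite mulr0 -[RHS]F1; ring.
+ by apply: (mulfI twnz); rewrite mulr0 -[RHS]F2; ring.
Qed.

Lemma edge_leaf (e : tE C) (u z : tV C) (a : 'I_3) :
  ((tsrc e = u /\ ttgt e = z) \/ (tsrc e = z /\ ttgt e = u)) ->
  (forall e', incid e' u -> e' = e) ->
  (forall j, (tleg C (inr j) == u) = (j == a)) ->
  tw e = (d * w a)%N /\ exists s, 0 < s /\
    tpos u = ((tpos z).1 + s * (Dr R D a).1, (tpos z).2 + s * (Dr R D a).2).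
Proof.
move=> Hend Honly Hleg.
have iu : incid e u by rewrite /incid; case: Hend => [[-> _]|[_ ->]]; rewrite eqxx ?orbT.
have [F1 F2] := flux_leaf_comp Honly iu.
have Pa : [pred j | tleg C (inr j) == u] =1 pred1 a by move=> j; rewrite /= Hleg.
rewrite (big_pred1 a Pa) in F1; rewrite (big_pred1 a Pa) in F2.
have dwa : (0 < d * w a)%N by rewrite muln_gt0 d1 wpos.
have Daz := prim_nz (Dprim a).
have twp : (0 < tw e)%N.
  rewrite lt0n; apply/negP => /eqP tw0; apply: Daz.
  have dwz : ((d * w a)%N)%:Z != 0 by rewrite eqz_nat -lt0n.
  rewrite tw0 mul0r add0r in F1; rewrite tw0 mul0r add0r in F2.
  case: (D a) F1 F2 => a1 a2 /= F1 F2; congr pair.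
  - by apply: (mulfI dwz); rewrite mulr0 -[RHS]F1 PoszM; ring.
  - by apply: (mulfI dwz); rewrite mulr0 -[RHS]F2 PoszM; ring.
have [_ [_ [eok _]]] := HC.
have := eok e; rewrite /edge_ok -[(tw e == 0)%N]negbK -lt0n twp /=.
case=> prim [tau [htau Ep]].
have psg : primitive (sgtu e u) by rewrite /sgtu; case: (tsrc e == u); [|apply: prim_neg].
have L : lscale (tw e)%:Z (sgtu e u) = lscale (d * w a)%N%:Z (lscale (-1) (D a)).
  rewrite /lscale /=; congr pair.
  - by apply/eqP; rewrite -subr_eq0 -[X in _ == X]F1; apply/eqP; rewrite PoszM; ring.
  - by apply/eqP; rewrite -subr_eq0 -[X in _ == X]F2; apply/eqP; rewrite PoszM; ring.
have [Etw Esg] := prim_scale twp psg (prim_neg (Dprim a)) L.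
split => //; exists tau; split => //.
case: Hend => [[Es Et]|[Es Et]].
- move: Esg; rewrite /sgtu Es eqxx => Etu.
  move: Ep; rewrite Es Et Etu /Dr /= => ->.
  case: (tpos u) => u1 u2 /=. rewrite !mulN1r. rewrite !intrN. congr pair; ring.
- have zu : (z == u) = false.
    by apply/negbTE; have := tree_nl e; rewrite Es Et.
  move: Esg; rewrite /sgtu Es zu => Etu.
  have Etu' : tu e = D a.
    have NN : forall v : lat, lscale (-1) (lscale (-1) v) = v.
      by case=> v1 v2; rewrite /lscale /= !mulN1r !opprK.
    by rewrite -(NN (tu e)) Etu NN.
  by move: Ep; rewrite Es Et Etu' /Dr.
Qed.

Definition J (e : tE C) (u v : tV C) := (tsrc e = u /\ ttgt e = v) \/ (tsrc e = v /\ ttgt e = u).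

Lemma not_isolated (v u : tV C) : u != v -> exists e, incid e v.
Proof.
move=> uv; have [/andP [_ /forallP con] _] := HC.
have /forallP := con v => /(_ u) /connectP [p pth lst].
case: p pth lst => [|h p] /= pth lst; first by rewrite lst eqxx in uv.
move/andP: pth => [/existsP [e He] _]; exists e.
by move: He => /orP [/andP [/eqP <- _]|/andP [_ /eqP <-]]; rewrite /incid eqxx ?orbT.
Qed.

Lemma J_incid e u v : J e u v -> forall r, incid e r -> r = u \/ r = v.
Proof.
by case=> [[Es Et]|[Es Et]] r; rewrite /incid Es Et => /orP [/eqP <-|/eqP <-]; auto.
Qed.

Lemma J_incid_l e u v : J e u v -> incid e u.
Proof. by rewrite /incid; case=> [[-> _]|[_ ->]]; rewrite eqxx ?orbT. Qed.
Lemma J_incid_r e u v : J e u v -> incid e v.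
Proof. by rewrite /incid; case=> [[_ ->]|[-> _]]; rewrite eqxx ?orbT. Qed.
Lemma J_sym e u v : J e u v -> J e v u.
Proof. by rewrite /J; tauto. Qed.

Lemma leg_exists (v : tV C) (k : nat) : (#|[pred e | incid e v]| <= k)%N ->
  (k + (tleg C mP1 == v) + (tleg C mP2 == v) < 3)%N -> exists j, tleg C (inr j) = v.
Proof.
move=> hk hs; have [_ [val _]] := HC; have := val v; rewrite /valence card_leg /=.
case E0 : (tleg C (inr i0) == v); first by exists i0; apply/eqP.
case E1 : (tleg C (inr i1) == v); first by exists i1; apply/eqP.
case E2 : (tleg C (inr i2) == v); first by exists i2; apply/eqP.
rewrite /mP1 /mP2 in hs.
move: hs hk; case: (tleg C (inl ord0) == v); case: (tleg C (inl ord_max) == v) => /= hs hk; lia.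
Qed.

Lemma incid_le1 (v : tV C) (e : tE C) : (forall e', incid e' v -> e' = e) ->
  (#|[pred e' | incid e' v]| <= 1)%N.
Proof.
move=> H; rewrite -(card1 e); apply: subset_leq_card; apply/subsetP => e'.
by rewrite !inE => /H ->.
Qed.

Lemma good_case (x y z : tV C) (ex ey : tE C) :
  x = tleg C mP1 -> y = tleg C mP2 -> x != y -> z != x -> z != y ->
  (forall v, v = x \/ v = y \/ v = z) -> #|tV C| = 3%N ->
  ex != ey -> (forall e, e = ex \/ e = ey) -> #|tE C| = 2%N ->
  J ex x z -> J ey y z ->
  exists (a b c : 'I_3) (s t : R),
  [/\ x = tleg C mP1, y = tleg C mP2, x != y, x != z & y != z] /\
  (forall v, v = x \/ v = y \/ v = z) /\ #|tV C| = 3%N /\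
  ex != ey /\ (forall e, e = ex \/ e = ey) /\ #|tE C| = 2%N /\
  J ex z x /\ J ey z y /\
  [/\ tleg C (inr a) = x, tleg C (inr b) = y & tleg C (inr c) = z] /\
  tw ex = (d * w a)%N /\ tw ey = (d * w b)%N /\
  0 < s /\ 0 < t /\
  tpos x = ((tpos z).1 + s * (Dr R D a).1, (tpos z).2 + s * (Dr R D a).2) /\
  tpos y = ((tpos z).1 + t * (Dr R D b).1, (tpos z).2 + t * (Dr R D b).2).
Proof.
move=> Ex Ey xy zx zy cov Vc exy Eall Ec Jx Jy.
have xz : x != z by rewrite eq_sym.
have yz : y != z by rewrite eq_sym.
have yx : y != x by rewrite eq_sym.
have onlyx : forall e', incid e' x -> e' = ex.
  move=> e' ie'; case: (Eall e') => // Ee; subst e'.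
  by case: (J_incid Jy ie') => E; rewrite E eqxx in xy xz.
have onlyy : forall e', incid e' y -> e' = ey.
  move=> e' ie'; case: (Eall e') => // Ee; subst e'.
  by case: (J_incid Jx ie') => E; rewrite E eqxx in yx yz.
have [a Ha] : exists a, tleg C (inr a) = x.
  apply: (leg_exists (incid_le1 onlyx)).
  by rewrite -Ex -Ey eqxx (negbTE yx).
have [b Hb] : exists b, tleg C (inr b) = y.
  apply: (leg_exists (incid_le1 onlyy)).
  by rewrite -Ex -Ey eqxx (negbTE xy).
have [c Hc] : exists c, tleg C (inr c) = z.
  apply: (@leg_exists z 2).
    by rewrite -Ec; apply: max_card.
  by rewrite -Ex -Ey (negbTE xz) (negbTE yz).
have ab : a != b by apply: contra_neq xy => E; rewrite -Ha -Hb E.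
have ac : a != c by apply: contra_neq xz => E; rewrite -Ha -Hc E.
have bc : b != c by apply: contra_neq yz => E; rewrite -Hb -Hc E.
have cv := cover3 ab ac bc.
have Lx : forall j, (tleg C (inr j) == x) = (j == a).
  move=> j; case: (cv j) => [->|[->|->]]; rewrite ?eqxx ?Ha ?Hb ?Hc ?eqxx //.
  - by rewrite (negbTE yx) eq_sym (negbTE ab).
  - by rewrite eq_sym (negbTE xz) eq_sym (negbTE ac).
have Ly : forall j, (tleg C (inr j) == y) = (j == b).
  move=> j; case: (cv j) => [->|[->|->]]; rewrite ?eqxx ?Ha ?Hb ?Hc ?eqxx //.
  - by rewrite (negbTE xy) (negbTE ab).
  - by rewrite eq_sym (negbTE yz) eq_sym (negbTE bc).
have [twx [s [hs Px]]] := edge_leaf Jx onlyx Lx.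
have [twy [t [ht Py]]] := edge_leaf Jy onlyy Ly.
exists a, b, c, s, t.
do 6 (split => //).
split; first exact: J_sym.
split; first exact: J_sym.
by do 6 (split => //).
Qed.

Lemma analysis : exists (x y z : tV C) (ex ey : tE C) (a b c : 'I_3) (s t : R),
  [/\ x = tleg C mP1, y = tleg C mP2, x != y, x != z & y != z] /\
  (forall v, v = x \/ v = y \/ v = z) /\ #|tV C| = 3%N /\
  ex != ey /\ (forall e, e = ex \/ e = ey) /\ #|tE C| = 2%N /\
  J ex z x /\ J ey z y /\
  [/\ tleg C (inr a) = x, tleg C (inr b) = y & tleg C (inr c) = z] /\
  tw ex = (d * w a)%N /\ tw ey = (d * w b)%N /\
  0 < s /\ 0 < t /\
  tpos x = ((tpos z).1 + s * (Dr R D a).1, (tpos z).2 + s * (Dr R D a).2) /\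
  tpos y = ((tpos z).1 + t * (Dr R D b).1, (tpos z).2 + t * (Dr R D b).2).
Proof.
have [tree [val _]] := HC.
have [Eb Vc] := edge_bound tree val.
have [P1e P2e] := pos_legs.
set x := tleg C mP1; set y := tleg C mP2.
have xy : x != y.
  apply/negP => /eqP Exy; apply: p12_neq; by rewrite -P1e -P2e -/x -/y Exy.
have nl := tree_nl.
move: Eb; rewrite leq_eqVlt ltnS leq_eqVlt ltnS leqn0 => /orP [/eqP E2|/orP [/eqP E1|/eqP E0]]; last first.
-
  by exfalso; move/negP: xy; apply; apply/eqP; apply: one_elem; rewrite Vc E0.
-
  exfalso.
  have : (0 < #|tE C|)%N by rewrite E1.
  case/card_gt0P => e _.
  have alle : forall e' : tE C, e' = e by move=> e'; apply: one_elem.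
  have Vc2 : #|tV C| = 2%N by rewrite Vc E1.
  have cv := two_elems Vc2 (nl e).
  have Honly : forall e', incid e' x -> e' = e by move=> e' _; apply: alle.
  case: (cv x) => Ex; case: (cv y) => Ey; rewrite ?Ex ?Ey ?eqxx // in xy.
  + by apply: (@leaf_contra e x y) => //; [left; split | left; split].
  + by apply: (@leaf_contra e x y) => //; [right; split | left; split].
-
  have Vc3 : #|tV C| = 3%N by rewrite Vc E2.
  have [e1 [e2 [n12 Eall]]] := two_elems_ex E2.
  have [z [zx zy cov]] := third_elem Vc3 xy.
  have xz : x != z by rewrite eq_sym.
  have yz : y != z by rewrite eq_sym.
  have yx : y != x by rewrite eq_sym.
  have joins : forall e, J e x y \/ J e x z \/ J e y z.
    move=> e; have := nl e; rewrite /J.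
    case: (cov (tsrc e)) => [->|[->|->]]; case: (cov (ttgt e)) => [->|[->|->]]; rewrite ?eqxx //; tauto.
  have iso : forall r : tV C, (forall e : tE C, incid e r -> False) -> False.
    move=> r H; have [u [ur _]] : exists u, u != r /\ True.
      case: (eqVneq r x) => [->|rx]; [by exists y | by exists x; rewrite eq_sym].
    by have [e He] := not_isolated ur; apply: (H e He).
  have [J1|[J1|J1]] := joins e1; have [J2|[J2|J2]] := joins e2.
  + exfalso; apply: (iso z) => e ie; case: (Eall e) => Ee; subst e;
      [case: (J_incid J1 ie) | case: (J_incid J2 ie)] => E; by rewrite E eqxx in zx zy.
  + exfalso; apply: (@leaf_contra e1 y x); [exact: J_sym J1 | by right; split |].
    move=> e' ie'; case: (Eall e') => // Ee; subst e'.
    by case: (J_incid J2 ie') => E; rewrite E eqxx in yx yz.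
  + exfalso; apply: (@leaf_contra e1 x y); [exact: J1 | by left; split |].
    move=> e' ie'; case: (Eall e') => // Ee; subst e'.
    by case: (J_incid J2 ie') => E; rewrite E eqxx in xy xz.
  + exfalso; apply: (@leaf_contra e2 y x); [exact: J_sym J2 | by right; split |].
    move=> e' ie'; case: (Eall e') => // Ee; subst e'.
    by case: (J_incid J1 ie') => E; rewrite E eqxx in yx yz.
  + exfalso; apply: (iso y) => e ie; case: (Eall e) => Ee; subst e;
      [case: (J_incid J1 ie) | case: (J_incid J2 ie)] => E; by rewrite E eqxx in yx yz.
  + have [a [b [c [s [t H]]]]] := good_case erefl erefl xy zx zy cov Vc3 n12 Eall E2 J1 J2.
    by exists x, y, z, e1, e2, a, b, c, s, t.
  + exfalso; apply: (@leaf_contra e2 x y); [exact: J2 | by left; split |].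
    move=> e' ie'; case: (Eall e') => // Ee; subst e'.
    by case: (J_incid J1 ie') => E; rewrite E eqxx in xy xz.
  + have Eall' : forall e, e = e2 \/ e = e1 by move=> e; case: (Eall e); auto.
    have n21 : e2 != e1 by rewrite eq_sym.
    have [a [b [c [s [t H]]]]] := good_case erefl erefl xy zx zy cov Vc3 n21 Eall' E2 J2 J1.
    by exists x, y, z, e2, e1, a, b, c, s, t.
  + exfalso; apply: (iso x) => e ie; case: (Eall e) => Ee; subst e;
      [case: (J_incid J1 ie) | case: (J_incid J2 ie)] => E; by rewrite E eqxx in xy xz.
Qed.
End Analysis.

Definition hypj (R : realFieldType) (D : 'I_3 -> lat) (j : 'I_3) : hyperplane R :=
  Hyp (- ((D j).2)%:~R, ((D j).1)%:~R) (((D j).2)%:~R, - ((D j).1)%:~R) 0.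

Unset Implicit Arguments.

Theorem proposition5p2 (R : realFieldType) (D : 'I_3 -> lat) (w : 'I_3 -> nat) (d : nat) :
  (forall k, 0 < w k)%N ->
  gcdn (gcdn (w ord0) (w (lift ord0 ord0))) (w ord_max) = 1%N ->
  (forall k, primitive (D k)) ->
  weight_relation w D ->
  rays_span D ->
  (1 <= d)%N ->
  exists bad : seq (hyperplane R),
    (forall H, In_seq H bad -> hyp_proper H) /\
    forall p1 p2 : R * R, (forall H, In_seq H bad -> off_hyp H p1 p2) ->
      exists C : tcurve R,
        in_Tq D w d p1 p2 C /\
        (forall C' : tcurve R, in_Tq D w d p1 p2 C' -> tc_iso C C') /\
        (forall g : nat, orderG D g ->
           forall s : tV C, has_index (zeta_sink D w d s) (g * (\prod_(k < 3) w k) * d ^ 2)%N).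
Proof.
move=> wpos wgcd Dprim rel span d1.
have [del [E01 E12 E20]] := delta_ex wpos wgcd rel.
have delnz : del != 0.
  by apply: contraNneq span => d0; rewrite /rays_span -/i0 -/i1 E01 d0 mulr0.
exists [:: hypj R D i0; hypj R D i1; hypj R D i2].
split.
  move=> H HH; have : exists j, H = hypj R D j.
    by case: HH => [->|[->|[->|[]]]]; eexists.
  case=> j ->; rewrite /hyp_proper /hypj /= => [[]] E2 E1 _ _.
  apply: (prim_nz (Dprim j)); rewrite /lzero.
  move/eqP: E2; rewrite oppr_eq0 intr_eq0 => /eqP E2.
  move/eqP: E1; rewrite intr_eq0 => /eqP E1.
  by case: (D j) E1 E2 => u1 u2 /= -> ->.
move=> p1 p2 off.
have gen : forall j, yv D (dx p1 p2) j != 0.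
  move=> j; apply/eqP => E.
  have : In_seq (hypj R D j) [:: hypj R D i0; hypj R D i1; hypj R D i2].
    by have [->|[->|->]] := ord3P j; rewrite /=; auto.
  move/off; apply; move: E; rewrite /hypj /yv /detR /dx /Dr /= => E.
  by rewrite -E; ring.
have [a [b [s [t [ab Hrep]]]]] := cone_ex wpos rel E01 E12 E20 delnz gen.
have Hrep' := Hrep; case: Hrep' => hs [ht Edx].
set q : R * R := (p1.1 - s * (Dr R D a).1, p1.2 - s * (Dr R D a).2).
have Ep1 : p1 = (q.1 + s * (Dr R D a).1, q.2 + s * (Dr R D a).2).
  by rewrite /q /=; case: (p1) => u1 u2 /=; congr pair; ring.
have Ep2 : p2 = (q.1 + t * (Dr R D b).1, q.2 + t * (Dr R D b).2).
  move: Edx; rewrite /q /dx; case: (p1) => u1 u2; case: (p2) => v1 v2 /= [] F1 F2.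
  by congr pair; [rewrite -[v1](subrK u1) F1 | rewrite -[v2](subrK u2) F2]; ring.
exists (mkC D w d a b q s t).
split; first exact: mkC_inTq.
split; last first.
  move=> g Hg v; rewrite (orderG_eq wgcd Dprim rel span E01 E20 Hg).
  exact: mkC_index.
move=> C' HC'.
have [x [y [z [ex [ey [a' [b' [c' [s' [t' H]]]]]]]]]] := analysis wpos d1 Dprim rel gen HC'.
case: H => [[Ex Ey xy xz yz]] [cov [Vc [nexy [Eall [Ec [Jx [Jy [[La Lb Lc] [twx [twy [hs' [ht' [Px Py]]]]]]]]]]]]].
have [P1e P2e] := pos_legs HC'.
have ab' : a' != b' by apply: contra_neq xy => E; rewrite -La -Lb E.
have ac' : a' != c' by apply: contra_neq xz => E; rewrite -La -Lc E.
have bc' : b' != c' by apply: contra_neq yz => E; rewrite -Lb -Lc E.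
have Hrep2 : rep D a' b' s' t' (dx p1 p2).
  split => //; split => //.
  rewrite /dx -P1e -P2e -Ex -Ey Px Py /=; congr pair; ring.
have [Ch1 [Es1 Et1]] := cone_uniq wpos rel E01 E12 E20 delnz ab Hrep.
have [Ch2 [Es2 Et2]] := cone_uniq wpos rel E01 E12 E20 delnz ab' Hrep2.
rewrite Ch1 in Ch2; case: Ch2 => Ea Eb; subst a' b'.
have Ess : s' = s by rewrite Es1 Es2.
have Ett : t' = t by rewrite Et1 Et2.
rewrite Ess in Px; rewrite Ett in Py.
have Pz : tpos z = q.
  have : tpos x = p1 by rewrite Ex.
  rewrite Px /q /Dr; case: (tpos z) => z1 z2 /= <-; rewrite /=; congr pair; ring.
pose f := fun v : 'I_3 => if v == i0 then z else if v == i1 then x else y.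
pose g := fun e : 'I_2 => if e == ord0 then ex else ey.
have zx : z != x by rewrite eq_sym.
have zy : z != y by rewrite eq_sym.
have yx : y != x by rewrite eq_sym.
have finj : injective f.
  move=> u v; have [->|[->|->]] := ord3P u; have [->|[->|->]] := ord3P v;
    rewrite /f /= => // E; by rewrite E eqxx in xy xz yz zx zy yx.
have ginj : injective g.
  move=> u v; have [->|->] := ord2P u; have [->|->] := ord2P v;
    rewrite /g /= => // E; rewrite E eqxx in nexy; by [|rewrite eq_sym eqxx in nexy].
exists f, g.
split; first by apply: inj_card_bij => //; rewrite Vc card_ord.
split; first by apply: inj_card_bij => //; rewrite Ec card_ord.
split.
  move=> e; have [->|->] := ord2P e; rewrite /g /f /=.
  - by case: Jx => [[-> ->]|[-> ->]]; [left|right].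
  - by case: Jy => [[-> ->]|[-> ->]]; [left|right].
split.
  by move=> e; have [->|->] := ord2P e; rewrite /g /=.
split.
  move=> v; have [->|[->|->]] := ord3P v; rewrite /f /=.
  - exact: Pz.
  - by rewrite Ex P1e; exact: Ep1.
  - by rewrite Ey P2e; exact: Ep2.
case=> [i|j] /=.
  by have [->|->] := ord2P i; rewrite /f /=.
have cv := cover3 ab ac' bc'.
case: (cv j) => [->|[->|->]]; rewrite /f ?eqxx ?(negbTE ab) ?(negbTE ac') ?(negbTE bc') /=.
- by rewrite La.
- by rewrite [b == a]eq_sym (negbTE ab) /= Lb.
- by rewrite [c' == a]eq_sym (negbTE ac') [c' == b]eq_sym (negbTE bc') /= Lc.
Qed.
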